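(* Let $\lambda>0$. There is a constant $C$ depending only on $\lambda$ such that for all $b\in(-1,1)$, $$\int_{-1}^1(1-bs)^{-\lambda-1}(1-s)(1-s^2)^{\lambda-1}ds\le\frac{C}{1-|b|}.$$ *)

(* Defs.v *)
From HB Require Import structures.
From mathcomp Require Import all_boot all_order all_algebra.
From mathcomp Require Import all_classical all_reals all_analysis.

(* Main.v *)
Require Import Defs.
From HB Require Import structures.
From mathcomp Require Import all_boot all_order all_algebra.
From mathcomp Require Import all_classical all_reals all_analysis.
Import Order.TTheory GRing.Theory Num.Theory.
Local Open Scope classical_set_scope.
Local Open Scope ring_scope.

From mathcomp Require Import ring lra.

Module Aux.
Import numFieldNormedType.Exports.
Section S.
Variable R : realType.

Lemma powR_pos (a p : R) : 0 < a -> a `^ p = expR (p * ln a).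
Proof. by move=> a0; rewrite /powR gt_eqF. Qed.

Lemma derivable_powR_comp (u : R -> R) (p x : R) : 0 < u x -> derivable u x 1 ->
  derivable (fun y => u y `^ p) x 1.
Proof.
move=> ux du.
have h1 : is_derive (u x) 1 ((@powR R) ^~ p) (p * u x `^ (p - 1)) by exact: is_derive1_powR.
have h2 : is_derive x 1 u ('D_1 u x) by exact/derivableP.
have := is_derive1_comp h1 h2.
by case.
Qed.

Variables (lam : R).
Hypothesis hlam : 0 < lam.

Definition Hf (sg b x : R) :=
  sg / (lam * (1 + sg * b)) * expR (lam * (ln (1 + sg * x) - ln (1 - b * x))).
Definition Gf (sg b x : R) :=
  (1 + sg * x) `^ (lam - 1) * (1 - b * x) `^ (- lam - 1).

Lemma Hf_derive (sg b x : R) : sg ^+ 2 = 1 -> 0 < 1 + sg * b ->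
  0 < 1 + sg * x -> 0 < 1 - b * x -> is_derive x 1 (Hf sg b) (Gf sg b x).
Proof.
move=> sg2 sgb ux vx.
have dg1 : is_derive x 1 (fun y : R => 1 + sg * y) sg.
  by apply: is_derive_eq; rewrite add0r mul1r /GRing.scale /= mulr1.
have dg2 : is_derive x 1 (fun y : R => 1 - b * y) (- b).
  by apply: is_derive_eq; rewrite add0r mul1r /GRing.scale /= mulr1.
have dl1 : is_derive x 1 (fun y : R => ln (1 + sg * y)) ((1 + sg * x)^-1 * sg).
  exact: (@is_derive1_comp R (@ln R) (fun y => 1 + sg * y) x _ _ (is_derive1_ln ux) dg1).
have dl2 : is_derive x 1 (fun y : R => ln (1 - b * y)) ((1 - b * x)^-1 * - b).
  exact: (@is_derive1_comp R (@ln R) (fun y => 1 - b * y) x _ _ (is_derive1_ln vx) dg2).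
have di : is_derive x 1 (fun y : R => lam * (ln (1 + sg * y) - ln (1 - b * y)))
   (lam * ((1 + sg * x)^-1 * sg - (1 - b * x)^-1 * - b)).
  by apply: is_derive_eq.
have de := @is_derive1_comp R (@expR R) (fun y : R => lam * (ln (1 + sg * y) - ln (1 - b * y))) x _ _ (is_derive_expR _) di.
rewrite /Hf.
apply: is_derive_eq.
rewrite /Gf !powR_pos //.
set u := 1 + sg * x; set v := 1 - b * x.
have -> : (lam - 1) * ln u = lam * ln u + - ln u by ring.
have -> : (- lam - 1) * ln v = - (lam * ln v) + - ln v by ring.
rewrite !expRD !expRN !lnK ?posrE //.
have h : sg / (lam * (1 + sg * b)) * (lam * (u^-1 * sg - v^-1 * - b)) = u^-1 * v^-1.
  have hsg : sg = 1 \/ sg = -1.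
    have : (sg - 1) * (sg + 1) == 0 by rewrite mulrDr !mulrBl -expr2 sg2; apply/eqP; ring.
    by rewrite mulf_eq0 subr_eq0 addr_eq0 => /orP[] /eqP; [left|right].
  have u0 : u != 0 by rewrite gt_eqF.
  have v0 : v != 0 by rewrite gt_eqF.
  have l0 : lam != 0 by rewrite gt_eqF.
  have s0 : 1 + sg * b != 0 by rewrite gt_eqF.
  move: u0 v0 s0; rewrite /u /v.
  case: hsg => -> u0 v0 s0; rewrite ?mul1r ?mulN1r in u0 v0 s0 *; field;
    by rewrite ?u0 ?v0 ?s0 ?l0.
rewrite /GRing.scale /= mulrBr expRD expRN.
set k := sg / _; set D := lam * _.
transitivity (expR (lam * ln u) * (expR (lam * ln v))^-1 * (k * D)); first ring.
rewrite h; ring.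
Qed.


Lemma Gf_derivable (sg b x : R) : 0 < 1 + sg * x -> 0 < 1 - b * x ->
  derivable (Gf sg b) x 1.
Proof.
move=> ux vx.
have d1 : derivable (fun y : R => 1 + sg * y) x 1 by [].
have d2 : derivable (fun y : R => 1 - b * y) x 1 by [].
have := derivableM (derivable_powR_comp (fun y : R => 1 + sg * y) (lam - 1) x ux d1) (derivable_powR_comp (fun y : R => 1 - b * y) (- lam - 1) x vx d2).
by [].
Qed.

Lemma ftc_G (sg b c d : R) : sg ^+ 2 = 1 -> 0 < 1 + sg * b -> c < d ->
  (forall x, c <= x <= d -> 0 < 1 + sg * x /\ 0 < 1 - b * x) ->
  (\int[@lebesgue_measure R]_(x in `[c, d]) (Gf sg b x)%:E = (Hf sg b d - Hf sg b c)%:E)%E.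
Proof.
move=> sg2 sgb cd hx.
have hx' : forall x, x \in `[c, d] -> 0 < 1 + sg * x /\ 0 < 1 - b * x.
  by move=> x; rewrite in_itv /= => /hx.
have dG : {in `[c, d], forall x, derivable (Gf sg b) x 1}.
  by move=> x /hx' [] ? ?; exact: Gf_derivable.
have dH : forall x, x \in `[c, d] -> is_derive x 1 (Hf sg b) (Gf sg b x).
  by move=> x /hx' [] ? ?; exact: Hf_derive.
have cH : forall x, x \in `[c, d] -> {for x, continuous (Hf sg b)}.
  move=> x /dH [] + _ => /derivable1_diffP; exact: differentiable_continuous.
rewrite EFinB; apply: continuous_FTC2 => //.
- exact: derivable_within_continuous.
- split.
  + move=> x xin.
    have xin' : x \in `[c, d] by move: xin; apply: subset_itv_oo_cc.
    by case: (dH x xin').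
  + apply: cvg_at_right_filter; apply: cH.
    by rewrite in_itv /= lexx ltW.
  + apply: cvg_at_left_filter; apply: cH.
    by rewrite in_itv /= lexx ltW.
- move=> x xin; rewrite derive1E.
  have xin' : x \in `[c, d] by move: xin; apply: subset_itv_oo_cc.
  by case: (dH x xin').
Qed.

Definition Ff (b s : R) := (1 - b * s) `^ (- lam - 1) * (1 - s) * (1 - s ^+ 2) `^ (lam - 1).

Lemma Gf_ge0 sg b s : 0 <= Gf sg b s.
Proof. by rewrite /Gf mulr_ge0 // powR_ge0. Qed.

Lemma Ff_ge0 b s : s <= 1 -> 0 <= Ff b s.
Proof. by move=> s1; rewrite /Ff !mulr_ge0 ?powR_ge0 // subr_ge0. Qed.

Lemma bound1 b s : -1 <= s <= 0 -> Ff b s <= 2 `^ lam * Gf 1 b s.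
Proof.
case/andP=> s1 s0.
have e : 1 - s ^+ 2 = (1 + s) * (1 - s) by ring.
have h1 : 0 <= 1 + s by lra.
have h2 : 0 <= 1 - s by lra.
rewrite /Ff /Gf e powRM // mul1r.
have -> : (1 - b * s) `^ (- lam - 1) * (1 - s) * ((1 + s) `^ (lam - 1) * (1 - s) `^ (lam - 1))
   = ((1 - s) * (1 - s) `^ (lam - 1)) * ((1 + s) `^ (lam - 1) * (1 - b * s) `^ (- lam - 1)) by ring.
rewrite mulr_powRB1 //; apply: ler_wpM2r; first by rewrite mulr_ge0 // powR_ge0.
apply: ge0_ler_powR; rewrite ?nnegrE; try lra; exact: ltW.
Qed.

Lemma bound2 b s : 0 <= s <= 1 -> Ff b s <= 2 `^ lam * Gf (-1) b s.
Proof.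
case/andP=> s0 s1.
have e : 1 - s ^+ 2 = (1 + s) * (1 - s) by ring.
have h1 : 0 <= 1 + s by lra.
have h2 : 0 <= 1 - s by lra.
rewrite /Ff /Gf e powRM // mulN1r.
have -> : (1 - b * s) `^ (- lam - 1) * (1 - s) * ((1 + s) `^ (lam - 1) * (1 - s) `^ (lam - 1))
   = ((1 - s) * (1 + s) `^ (lam - 1)) * ((1 - s) `^ (lam - 1) * (1 - b * s) `^ (- lam - 1)) by ring.
apply: ler_wpM2r; first by rewrite mulr_ge0 // powR_ge0.
apply: (@le_trans _ _ ((1 + s) * (1 + s) `^ (lam - 1))).
  by apply: ler_wpM2r; [exact: powR_ge0 | lra].
rewrite mulr_powRB1 //; apply: ge0_ler_powR; rewrite ?nnegrE; try lra; exact: ltW.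
Qed.

Lemma mF b : measurable_fun setT (Ff b).
Proof.
apply: measurable_realfun.measurable_funM; first apply: measurable_realfun.measurable_funM.
- apply: (measurableT_comp (measurable_realfun.measurable_powR _)).
  by apply: measurable_realfun.measurable_funB => //; apply: measurable_realfun.measurable_funM.
- by apply: measurable_realfun.measurable_funB.
- apply: (measurableT_comp (measurable_realfun.measurable_powR _)).
  apply: measurable_realfun.measurable_funB => //; exact: measurable_realfun.measurable_funX.
Qed.

Lemma mG sg b : measurable_fun setT (Gf sg b).
Proof.
apply: measurable_realfun.measurable_funM.
- apply: (measurableT_comp (measurable_realfun.measurable_powR _)).
  by apply: measurable_realfun.measurable_funD => //; apply: measurable_realfun.measurable_funM.
- apply: (measurableT_comp (measurable_realfun.measurable_powR _)).
  by apply: measurable_realfun.measurable_funB => //; apply: measurable_realfun.measurable_funM.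
Qed.

Lemma Hf0 sg b : Hf sg b 0 = sg / (lam * (1 + sg * b)).
Proof. by rewrite /Hf !mulr0 addr0 subr0 subrr mulr0 expR0 mulr1. Qed.

Lemma piece1 (b c : R) : -1 < b < 1 -> -1 < c < 0 ->
  (\int[@lebesgue_measure R]_(x in `[c, 0%R]) (Ff b x)%:E <= (2 `^ lam / (lam * (1 + b)))%:E)%E.
Proof.
move=> /andP[b1 b2] /andP[c1 c2].
apply: (@le_trans _ _ (\int[@lebesgue_measure R]_(x in `[c, 0%R]) (2 `^ lam * Gf 1 b x)%:E)%E).
  apply: ge0_le_integral => //.
  - move=> x; rewrite /= in_itv /= => /andP[? ?]; rewrite lee_fin Ff_ge0 //; lra.
  - apply/measurable_realfun.measurable_EFinP. apply: measurable_funTS. exact: mF.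
  - apply/measurable_realfun.measurable_EFinP/measurable_funTS.
    by apply: measurable_realfun.measurable_funM => //; exact: mG.
  - move=> x; rewrite /= in_itv /= => /andP[? ?]; rewrite lee_fin bound1 //.
    apply/andP; split => //; lra.
under eq_integral do rewrite EFinM.
rewrite ge0_integralZl_EFin //; try (by move=> x _; rewrite lee_fin Gf_ge0);
  try (by apply/measurable_realfun.measurable_EFinP; apply: measurable_funTS; exact: mG);
  try (by exact: powR_ge0).
rewrite ftc_G //; last 3 first.
- by rewrite expr1n.
- by rewrite mul1r; lra.
- move=> x /andP[x1 x2]; rewrite mul1r; split; first lra.
  nra.
rewrite -EFinM lee_fin Hf0 !mul1r.
rewrite ler_pM2l ?powR_gt0 //.
rewrite lerBlDr lerDl /Hf.
rewrite mulr_ge0 // ?expR_ge0 //.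
apply: divr_ge0 => //; apply: mulr_ge0; [exact: ltW | lra].
Qed.

Lemma piece2 (b d : R) : -1 < b < 1 -> 0 < d < 1 ->
  (\int[@lebesgue_measure R]_(x in `[0%R, d]) (Ff b x)%:E <= (2 `^ lam / (lam * (1 - b)))%:E)%E.
Proof.
move=> /andP[b1 b2] /andP[d1 d2].
apply: (@le_trans _ _ (\int[@lebesgue_measure R]_(x in `[0%R, d]) (2 `^ lam * Gf (-1) b x)%:E)%E).
  apply: ge0_le_integral => //.
  - move=> x; rewrite /= in_itv /= => /andP[? ?]; rewrite lee_fin Ff_ge0 //; lra.
  - apply/measurable_realfun.measurable_EFinP. apply: measurable_funTS. exact: mF.
  - apply/measurable_realfun.measurable_EFinP/measurable_funTS.
    by apply: measurable_realfun.measurable_funM => //; exact: mG.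
  - move=> x; rewrite /= in_itv /= => /andP[? ?]; rewrite lee_fin bound2 //.
    apply/andP; split => //; lra.
under eq_integral do rewrite EFinM.
rewrite ge0_integralZl_EFin //; try (by move=> x _; rewrite lee_fin Gf_ge0);
  try (by apply/measurable_realfun.measurable_EFinP; apply: measurable_funTS; exact: mG);
  try (by exact: powR_ge0).
rewrite ftc_G //; last 3 first.
- by rewrite sqrrN expr1n.
- by rewrite mulN1r; lra.
- move=> x /andP[x1 x2]; rewrite mulN1r; split; first lra.
  nra.
rewrite -EFinM lee_fin Hf0.
rewrite ler_pM2l ?powR_gt0 //.
have hd : Hf (-1) b d <= 0.
  rewrite /Hf mulr_le0_ge0 ?expR_ge0 //.
  rewrite mulN1r mulN1r oppr_le0 invr_ge0 mulr_ge0 //; [exact: ltW | lra].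
have -> : (-1) / (lam * (1 + -1 * b)) = - (lam * (1 - b))^-1 by rewrite mulN1r mulN1r.
lra.
Qed.

Lemma compact_bound (b e : R) : -1 < b < 1 -> 0 < e < 1 ->
  (\int[@lebesgue_measure R]_(x in `[(-1 + e)%R, (1 - e)%R]) (Ff b x)%:E <=
    (2 `^ lam / (lam * (1 + b)) + 2 `^ lam / (lam * (1 - b)))%:E)%E.
Proof.
move=> hb /andP[e0 e1].
rewrite (@itv_bndbnd_setU _ _ _ (BRight 0%R)); last 2 first.
- by rewrite bnd_simp; lra.
- by rewrite bnd_simp; lra.
rewrite ge0_integral_setU //=; try (apply/measurable_realfun.measurable_EFinP; apply: measurable_funTS; exact: mF).
- rewrite EFinD; apply: leeD.
    by apply: piece1 => //; apply/andP; split; lra.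
  rewrite integral_itv_obnd_cbnd //; last (apply/measurable_realfun.measurable_EFinP; apply: measurable_funTS; exact: mF).
  by apply: piece2 => //; apply/andP; split; lra.
- move=> x [] /=; rewrite in_itv /= => /andP[? ?]; rewrite lee_fin Ff_ge0 //; lra.
- rewrite disj_set2E; apply/eqP/seteqP; split => x //=.
  by rewrite !in_itv /= => -[/andP[_ a] /andP[c _]]; lra.
Qed.

Definition An (n : nat) : set R := `[(-1 + (n.+2)%:R^-1)%R, (1 - (n.+2)%:R^-1)%R].

Lemma full_bound (b : R) : -1 < b < 1 ->
  (\int[@lebesgue_measure R]_(x in `[(-1)%R, 1%R]) (Ff b x)%:E <=
    (2 `^ lam / (lam * (1 + b)) + 2 `^ lam / (lam * (1 - b)))%:E)%E.
Proof.
move=> hb.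
set K := (2 `^ lam / _ + _).
rewrite integral_itv_bndoo; last first.
  by apply/measurable_realfun.measurable_EFinP; apply: measurable_funTS; exact: mF.
pose g n : R -> \bar R := fun x => ((Ff b) \_ (An n) x)%:E.
have inv2 n : 0 < ((n.+2)%:R : R)^-1 < 1.
  by rewrite invr_gt0 ltr0n /= invf_lt1 ?ltr0n // ltr1n.
have AnS m n : (m <= n)%N -> An m `<=` An n.
  move=> mn x; rewrite /An /= !in_itv /= => /andP[h1 h2].
  have : ((n.+2)%:R : R)^-1 <= ((m.+2)%:R : R)^-1.
    by rewrite lef_pV2 ?posrE ?ltr0n // ler_nat.
  move=> h; apply/andP; split; [apply: le_trans h1; rewrite lerD2l // | apply: (le_trans h2); rewrite lerD2l lerN2 //].
have eqlim : forall x, (`]-1%R, 1%R[%classic : set R) x -> (Ff b x)%:E = limn (g^~ x).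
  move=> x; rewrite /= in_itv /= => /andP[x1 x2].
  have hp : 0 < Num.min (1 + x) (1 - x) by rewrite lt_min; apply/andP; split; lra.
  apply/esym/lim_near_cst; first exact: ereal_hausdorff.
  have := @near_infty_natSinv_lt R (PosNum hp).
  apply: filterS => n /= hn.
  rewrite /g patchE ifT //; apply/mem_set.
  have h1 : ((n.+2)%:R : R)^-1 <= ((n.+1)%:R : R)^-1.
    by rewrite lef_pV2 ?posrE ?ltr0n // ler_nat.
  move: hn; rewrite lt_min => /andP[hn1 hn2].
  rewrite /An /= in_itv /=; have hp1 := le_lt_trans h1 hn1; have hp2 := le_lt_trans h1 hn2.
  apply/andP; split; [rewrite addrC lerBlDr addrC; exact: ltW hp1 | rewrite lerBrDr -lerBrDl; exact: ltW hp2].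
have hI n : (\int[@lebesgue_measure R]_(x in `](-1)%R, 1%R[) g n x
     = \int[@lebesgue_measure R]_(x in An n) (Ff b x)%:E)%E.
  transitivity (\int[@lebesgue_measure R]_(x in `](-1)%R, 1%R[) ((EFin \o Ff b) \_ (An n)) x)%E.
    by apply: eq_integral => x _; rewrite /g !patchE; case: ifP.
  rewrite -integral_mkcondr setIidr //.
  move=> x; rewrite /An /= !in_itv /= => /andP[h1 h2].
  have := inv2 n; case/andP => p0 _.
  apply/andP; split.
    by apply: lt_le_trans h1; rewrite ltrDl.
  by apply: le_lt_trans h2 _; rewrite ltrBlDr ltrDl.
have hmono m n : (m <= n)%N -> (\int[@lebesgue_measure R]_(x in An m) (Ff b x)%:E
     <= \int[@lebesgue_measure R]_(x in An n) (Ff b x)%:E)%E.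
  move=> mn.
  apply: ge0_subset_integral => //; try exact: measurable_itv.
  - apply/measurable_realfun.measurable_EFinP; apply: measurable_funTS; exact: mF.
  - move=> x; rewrite /An /= in_itv /= => /andP[_ h2]; rewrite lee_fin Ff_ge0 //.
    by apply: le_trans h2 _; rewrite gerBl ltW // (andP (inv2 n)).1.
  - exact: AnS.
under eq_integral => x hx do rewrite (eqlim x (set_mem hx)).
rewrite monotone_convergence //; last 3 first.
- move=> n; apply/measurable_realfun.measurable_EFinP.
  apply: (proj1 (@measurable_restrict _ _ _ _ (An n) `]-1%R, 1%R[ (Ff b) _ _)).
  + exact: measurable_itv.
  + exact: measurable_itv.
  + exact: measurable_funTS (mF b).
- move=> n x /=; rewrite in_itv /= => /andP[_ x1].
  by rewrite /g patchE lee_fin; case: ifP => // _; rewrite Ff_ge0 // ltW.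
- move=> x /=; rewrite in_itv /= => /andP[_ x1] m n mn.
  rewrite /g !patchE lee_fin; case: ifPn => [xm|_].
    by rewrite ifT ?mem_set //; apply: (AnS m n mn); exact: set_mem.
  by case: ifP => // _; rewrite Ff_ge0 // ltW.
apply: lime_le.
  apply: ereal_nondecreasing_is_cvgn => m n mn.
  have := hmono m n mn; rewrite -!hI; exact.
apply: nearW => n.
have := inv2 n; case/andP => p0 p1.
have := @compact_bound b (n.+2%:R^-1) hb (introT andP (conj p0 p1)).
rewrite -hI; exact.
Qed.
End S.
End Aux.

Theorem mainTheorem8 (R : realType) (lam : R) (hlam : 0 < lam) :
  exists C : R, forall b : R, -1 < b < 1 ->
    (\int[@lebesgue_measure R]_(s in `[(-1)%R, 1%R])
        (((1 - b * s) `^ (- lam - 1)) * (1 - s) * ((1 - s ^+ 2) `^ (lam - 1)))%:E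
      <= (C / (1 - `|b|))%:E)%E.
Proof.
exists (2 * (2 `^ lam / lam)) => b hb.
apply: (le_trans (@Aux.full_bound R lam hlam b hb)).
rewrite lee_fin.
have hn1 : b <= `|b| := ler_norm b.
have hn2 : - b <= `|b| by rewrite -normrN ler_norm.
have hn3 : `|b| < 1 by rewrite ltr_norml.
have a0 : 0 < 2 `^ lam / lam by rewrite divr_gt0 ?powR_gt0.
set a := 2 `^ lam / lam in a0 *.
have e0 : 0 < 1 - `|b| by lra.
have k1 : 2 `^ lam / (lam * (1 + b)) = a / (1 + b).
  rewrite /a; field; apply/andP; split; rewrite gt_eqF //; lra.
have k2 : 2 `^ lam / (lam * (1 - b)) = a / (1 - b).
  rewrite /a; field; apply/andP; split; rewrite gt_eqF //; lra.
have l1 : a / (1 + b) <= a / (1 - `|b|).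
  rewrite ler_pM2l // lef_pV2 ?posrE //; lra.
have l2 : a / (1 - b) <= a / (1 - `|b|).
  rewrite ler_pM2l // lef_pV2 ?posrE //; lra.
rewrite k1 k2.
have -> : 2 * a / (1 - `|b|) = a / (1 - `|b|) + a / (1 - `|b|) by field; rewrite gt_eqF.
exact: lerD.
Qed.
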